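(* Let $K$ be a field, $q\in K\setminus\{0\}$ not a root of unity, and let $A=K\langle a,b\rangle/(ab-qba-1)$ be the quantized Weyl algebra. Let $w=ab-ba$ (a normal element), and let $\sigma$ be the automorphism of $A$ with $\sigma(a)=q^{-1}a$, $\sigma(b)=qb$, so that $wy=\sigma(y)w$ for all $y\in A$. Let $J=Aa$ and $x=(1-q)b-1$. Then: (a) $J$ is a maximal left ideal of $A$, and for every $m\ge0$ there is no $c\in A$ with $\sigma^m(x)c-1\in J$; (b) the left $A$-module $N=A/Ax$ is not artinian, and its nonzero submodules are exactly the modules $w^mN$, $m\ge 0$, which form a strictly descending chain $N\supsetneq wN\supsetneq w^2N\supsetneq\cdots$. *)

(* Defs.v *)
From HB Require Import structures.
From mathcomp Require Import all_boot all_order all_algebra.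
Set Implicit Arguments. Unset Strict Implicit. Unset Printing Implicit Defensive.
Import GRing.Theory.
Local Open Scope ring_scope.

Definition is_alg_morph (K : fieldType) (A B : algType K) (f : A -> B) : Prop :=
  [/\ (forall x y, f (x + y) = f x + f y),
      (forall (k : K) x, f (k *: x) = k *: f x),
      (forall x y, f (x * y) = f x * f y) & f 1 = 1].

Definition qWeyl_rel (K : fieldType) (B : algType K) (q : K) (a b : B) : Prop :=
  a * b - q *: (b * a) - 1 = 0.

(* (A, a, b) is the K-algebra K<a,b>/(ab - q ba - 1), characterised (up to
   unique isomorphism) by the universal property of the presentation. *)
Definition is_qWeyl_algebra (K : fieldType) (q : K) (A : algType K) (a b : A) : Prop :=
  qWeyl_rel q a b /\
  forall (B : algType K) (a' b' : B), qWeyl_rel q a' b' ->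
    (exists f : A -> B, [/\ is_alg_morph f, f a = a' & f b = b']) /\
    (forall f g : A -> B, is_alg_morph f -> is_alg_morph g ->
        f a = g a -> f b = g b -> f =1 g).

Definition pred_eq (R : Type) (S T : R -> Prop) : Prop := forall y, S y <-> T y.

Definition left_ideal (R : ringType) (I : R -> Prop) : Prop :=
  [/\ I 0, (forall x y, I x -> I y -> I (x + y)) & (forall r x, I x -> I (r * x))].

Definition lprinc (R : ringType) (x : R) : R -> Prop := fun y => exists c, y = c * x.

Definition maximal_left_ideal (R : ringType) (I : R -> Prop) : Prop :=
  [/\ left_ideal I, (exists y, ~ I y) &
      forall I', left_ideal I' -> (forall y, I y -> I' y) ->
        pred_eq I' I \/ (forall y, I' y)].

(* Submodules of the cyclic left module R/L, encoded (correspondence theorem)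
   by their preimages in R: left ideals containing L. *)
Definition submod_quot (R : ringType) (L S : R -> Prop) : Prop :=
  left_ideal S /\ (forall y, L y -> S y).

Definition nonzero_submod (R : ringType) (L S : R -> Prop) : Prop :=
  exists y, S y /\ ~ L y.

Definition artinian_quot (R : ringType) (L : R -> Prop) : Prop :=
  forall S : nat -> R -> Prop, (forall n, submod_quot L (S n)) ->
    (forall n y, S n.+1 y -> S n y) ->
    exists n, forall k, (n <= k)%N -> pred_eq (S k) (S n).

(* Preimage in R of the submodule r (R/L) = { r * (n + L) } of R/L. *)
Definition lmul_submod (R : ringType) (L : R -> Prop) (r : R) : R -> Prop :=
  fun y => exists n, L (y - r * n).

(* Main.v *)
Require Import Defs.
From HB Require Import structures.
From mathcomp Require Import all_boot all_order all_algebra.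
From Stdlib Require Import ClassicalEpsilon FunctionalExtensionality ProofIrrelevance Classical.
Import GRing.Theory.
Local Open Scope ring_scope.

Module Helpers.
Set Implicit Arguments. Unset Strict Implicit. Unset Printing Implicit Defensive.

Definition gen_eq (T : Type) (x y : T) : bool :=
  if excluded_middle_informative (x = y) then true else false.
Lemma gen_eqP (T : Type) : Equality.axiom (@gen_eq T).
Proof. move=> x y; rewrite /gen_eq; case: excluded_middle_informative=> h; by constructor. Qed.

Definition gen_find (T : Type) (P : pred T) (n : nat) : option T :=
  match excluded_middle_informative (exists x, P x) with
  | left e => Some (proj1_sig (constructive_indefinite_description _ e))
  | right _ => None end.
Lemma gen_find_correct T (P : pred T) n x : gen_find P n = Some x -> P x.
Proof. rewrite /gen_find; case: excluded_middle_informative=> // e [<-].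
by case: constructive_indefinite_description. Qed.
Lemma gen_find_complete T (P : pred T) : (exists x, P x) -> exists n, gen_find P n.
Proof. move=> e; exists 0%N; rewrite /gen_find; case: excluded_middle_informative=> //. Qed.
Lemma gen_find_ext T (P Q : pred T) : P =1 Q -> gen_find P =1 gen_find Q.
Proof. move=> h; have -> : P = Q by apply: functional_extensionality. by []. Qed.

Record subsp (K : fieldType) (V : lalgType K) := Subsp {
  sp :> V -> Prop; sp0 : sp 0; spD : forall u v, sp u -> sp v -> sp (u + v);
  spZ : forall (k : K) u, sp u -> sp (k *: u) }.

Record endo (K : fieldType) (V : lalgType K) (S : subsp V) := Endo {
  ev :> V -> V;
  ev_add : forall u v, ev (u + v) = ev u + ev v;
  ev_scale : forall (k : K) u, ev (k *: u) = k *: ev u;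
  ev_sp : forall u, S u -> S (ev u) }.

Section EndoAlg.
Variables (K : fieldType) (V : lalgType K) (S : subsp V).
Local Notation E := (endo S).

Lemma endo_ext (f g : E) : (forall v, f v = g v) -> f = g.
Proof.
case: f g => f fa fs fp [g ga gs gp] /= h.
have e : f = g by apply: functional_extensionality.
subst g; f_equal; apply: proof_irrelevance.
Qed.

HB.instance Definition _ := hasDecEq.Build E (@gen_eqP E).
HB.instance Definition _ := hasChoice.Build E (@gen_find_correct E) (@gen_find_complete E) (@gen_find_ext E).

Definition e0 : E.
refine (@Endo _ _ S (fun _ => 0) _ _ _).
- by move=> *; rewrite addr0.
- by move=> *; rewrite scaler0.
- by move=> *; apply: sp0.
Defined.
Definition eadd (f g : E) : E.
refine (@Endo _ _ S (fun v => f v + g v) _ _ _).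
- by move=> u v; rewrite !ev_add addrACA.
- by move=> k u; rewrite !ev_scale scalerDr.
- by move=> u h; apply: spD; apply: ev_sp.
Defined.
Definition eopp (f : E) : E.
refine (@Endo _ _ S (fun v => - f v) _ _ _).
- by move=> u v; rewrite ev_add opprD.
- by move=> k u; rewrite ev_scale scalerN.
- by move=> u h; rewrite -scaleN1r; apply: spZ; apply: ev_sp.
Defined.
Definition e1 : E.
refine (@Endo _ _ S (fun v => v) _ _ _) => //.
Defined.
Definition emul (f g : E) : E.
refine (@Endo _ _ S (fun v => f (g v)) _ _ _).
- by move=> u v; rewrite !ev_add.
- by move=> k u; rewrite !ev_scale.
- by move=> u h; do 2 apply: ev_sp.
Defined.
Definition escale (k : K) (f : E) : E.
refine (@Endo _ _ S (fun v => k *: f v) _ _ _).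
- by move=> u v; rewrite ev_add scalerDr.
- by move=> c u; rewrite ev_scale !scalerA mulrC.
- by move=> u h; apply: spZ; apply: ev_sp.
Defined.

Lemma eaddA : associative eadd. Proof. by move=> *; apply: endo_ext=> v /=; rewrite addrA. Qed.
Lemma eaddC : commutative eadd. Proof. by move=> *; apply: endo_ext=> v /=; rewrite addrC. Qed.
Lemma eadd0 : left_id e0 eadd. Proof. by move=> *; apply: endo_ext=> v /=; rewrite add0r. Qed.
Lemma eaddN : left_inverse e0 eopp eadd. Proof. by move=> *; apply: endo_ext=> v /=; rewrite addNr. Qed.
HB.instance Definition _ := GRing.isZmodule.Build E eaddA eaddC eadd0 eaddN.

Lemma emulA : associative emul. Proof. by move=> *; apply: endo_ext. Qed.
Lemma emul1 : left_id e1 emul. Proof. by move=> *; apply: endo_ext. Qed.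
Lemma emulr1 : right_id e1 emul. Proof. by move=> *; apply: endo_ext. Qed.
Lemma emulDl : left_distributive emul (@GRing.add E). Proof. by move=> *; apply: endo_ext. Qed.
Lemma emulDr : right_distributive emul (@GRing.add E).
Proof. by move=> *; apply: endo_ext=> v /=; rewrite ev_add. Qed.
Lemma e1_neq0 : e1 != 0.
Proof. apply/eqP=> h; have := congr1 (fun f : E => ev f 1) h => /= /eqP; by rewrite oner_eq0. Qed.
HB.instance Definition _ := GRing.Zmodule_isNzRing.Build E emulA emul1 emulr1 emulDl emulDr e1_neq0.

Lemma escaleA a b (f : E) : escale a (escale b f) = escale (a * b) f.
Proof. by apply: endo_ext=> v /=; rewrite scalerA. Qed.
Lemma escale1 : left_id 1 escale. Proof. by move=> *; apply: endo_ext=> v /=; rewrite scale1r. Qed.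
Lemma escaleDr : right_distributive escale +%R.
Proof. by move=> *; apply: endo_ext=> v /=; rewrite scalerDr. Qed.
Lemma escaleDl (f : E) : {morph escale^~ f : a b / a + b}.
Proof. by move=> *; apply: endo_ext=> v /=; rewrite scalerDl. Qed.
HB.instance Definition _ := GRing.Zmodule_isLmodule.Build K E escaleA escale1 escaleDr escaleDl.
Lemma escaleAl (a : K) (f g : E) : a *: (f * g) = (a *: f) * g.
Proof. by apply: endo_ext. Qed.
HB.instance Definition _ := GRing.Lmodule_isLalgebra.Build K E escaleAl.
Lemma escaleAr (a : K) (f g : E) : a *: (f * g) = f * (a *: g).
Proof. by apply: endo_ext=> v /=; rewrite ev_scale. Qed.
HB.instance Definition _ := GRing.Lalgebra_isAlgebra.Build K E escaleAr.

Lemma evM (f g : E) v : (f * g) v = f (g v). Proof. by []. Qed.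
Lemma evD (f g : E) v : (f + g) v = f v + g v. Proof. by []. Qed.
Lemma evZ k (f : E) v : (k *: f) v = k *: f v. Proof. by []. Qed.
Lemma ev1 v : (1 : E) v = v. Proof. by []. Qed.
Lemma ev0 v : (0 : E) v = 0. Proof. by []. Qed.
Lemma evN (f : E) v : (- f) v = - f v. Proof. by []. Qed.
End EndoAlg.

Definition fullsp (K : fieldType) (V : lalgType K) : subsp V :=
  @Subsp K V (fun _ => True) I (fun _ _ _ _ => I) (fun _ _ _ => I).

Section Morph.
Variables (K : fieldType) (A B : algType K) (f : A -> B) (hf : is_alg_morph f).
Lemma mD u v : f (u + v) = f u + f v. Proof. by case: hf. Qed.
Lemma mZ k u : f (k *: u) = k *: f u. Proof. by case: hf. Qed.
Lemma mM u v : f (u * v) = f u * f v. Proof. by case: hf. Qed.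
Lemma m1 : f 1 = 1. Proof. by case: hf. Qed.
Lemma m0 : f 0 = 0. Proof. by rewrite -(scale0r (0:A)) mZ scale0r. Qed.
Lemma mN u : f (- u) = - f u. Proof. by rewrite -scaleN1r mZ scaleN1r. Qed.
Lemma mB u v : f (u - v) = f u - f v. Proof. by rewrite mD mN. Qed.
Lemma mX u n : f (u ^+ n) = f u ^+ n.
Proof. elim: n=> [|n IH]; first by rewrite !expr0 m1. by rewrite !exprS mM IH. Qed.
Lemma mH (y : A) (p : {poly K}) : f (horner_alg y p) = horner_alg (f y) p.
Proof.
elim/poly_ind: p=> [|p c IH]; first by rewrite !rmorph0 m0.
by rewrite !rmorphD !rmorphM /= !horner_algC !horner_algX mD mM IH mZ m1.
Qed.
End Morph.

Section Gen.
Variables (K : fieldType) (q : K) (A : algType K) (a b : A) (hA : is_qWeyl_algebra q a b).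

Lemma rel_ab : a * b = q *: (b * a) + 1.
Proof. case: hA=> h _; by rewrite -(subr0_eq h) addrC subrK. Qed.

Lemma univ_ex (B : algType K) (a' b' : B) : qWeyl_rel q a' b' ->
  exists f : A -> B, [/\ is_alg_morph f, f a = a' & f b = b'].
Proof. by case: hA=> _ h /h []. Qed.
Lemma univ_uniq (B : algType K) (a' b' : B) : qWeyl_rel q a' b' ->
  forall f g : A -> B, is_alg_morph f -> is_alg_morph g ->
        f a = g a -> f b = g b -> f =1 g.
Proof. by case: hA=> _ h /h []. Qed.

Lemma gen (P : A -> Prop) : P 1 -> (forall u v, P u -> P v -> P (u + v)) ->
  (forall (k : K) u, P u -> P (k *: u)) -> (forall u v, P u -> P v -> P (u * v)) ->
  P a -> P b -> forall y, P y.
Proof.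
move=> P1 PD PZ PM Pa Pb.
have P0 : P 0 by rewrite -(scale0r (1 : A)); apply: PZ.
pose sp := @Subsp K A P P0 PD PZ.
pose La : endo sp := @Endo K A sp (fun v => a * v) (mulrDr a) (fun k u => esym (scalerAr k a u)) (PM a ^~ Pa).
pose Lb : endo sp := @Endo K A sp (fun v => b * v) (mulrDr b) (fun k u => esym (scalerAr k b u)) (PM b ^~ Pb).
have rel : qWeyl_rel q La Lb.
  rewrite /qWeyl_rel; apply: endo_ext=> v /=.
  rewrite /= !mulrA rel_ab mulrDl mul1r -scalerAl.
  by rewrite [q *: _ + v]addrC addrK subrr.
have [phi [hphi pa pb]] := univ_ex rel.
pose Lm (y : A) : endo (fullsp A) := @Endo K A (fullsp A) (fun v => y * v) (mulrDr y) (fun k u => esym (scalerAr k y u)) (fun _ _ => I).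
pose io (g : endo sp) : endo (fullsp A) := @Endo K A (fullsp A) g (ev_add g) (ev_scale g) (fun _ _ => I).
have rel2 : qWeyl_rel q (Lm a) (Lm b).
  rewrite /qWeyl_rel; apply: endo_ext=> v /=.
  rewrite /= !mulrA rel_ab mulrDl mul1r -scalerAl.
  by rewrite [q *: _ + v]addrC addrK subrr.
have hio : is_alg_morph (io \o phi).
  case: hphi=> h1 h2 h3 h4; split=> [u v|k u|u v|] /=; rewrite ?h1 ?h2 ?h3 ?h4; by apply: endo_ext.
have hLm : is_alg_morph Lm.
  split=> [u v|k u|u v|]; apply: endo_ext=> w /=; by rewrite ?mulrDl ?scalerAl ?mulrA ?mul1r.
have e := univ_uniq rel2 hio hLm.
move=> y.
have : io (phi y) = Lm y by apply: e; [rewrite /= pa | rewrite /= pb]; apply: endo_ext.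
move=> /(congr1 (fun g : endo (fullsp A) => ev g 1)) /=; rewrite mulr1=> <-.
exact: (ev_sp (phi y) P1).
Qed.

Lemma left_gen (Q : A -> Prop) : Q 1 -> (forall u v, Q u -> Q v -> Q (u + v)) ->
  (forall (k : K) u, Q u -> Q (k *: u)) -> (forall u, Q u -> Q (a * u)) ->
  (forall u, Q u -> Q (b * u)) -> forall y, Q y.
Proof.
move=> Q1 QD QZ Qa Qb y.
suff : forall y z, Q z -> Q (y * z) by move/(_ y 1 Q1); rewrite mulr1.
apply: gen.
- by move=> z; rewrite mul1r.
- by move=> u v hu hv z hz; rewrite mulrDl; apply: QD; [apply: hu|apply: hv].
- by move=> k u hu z hz; rewrite -scalerAl; apply: QZ; apply: hu.
- by move=> u v hu hv z hz; rewrite -mulrA; apply: hu; apply: hv.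
- by move=> z; apply: Qa.
- by move=> z; apply: Qb.
Qed.
End Gen.

Lemma ev_zero (K : fieldType) (V : lalgType K) (S : subsp V) (f : endo S) : f 0 = 0.
Proof. by have := ev_scale f 0 0; rewrite !scale0r. Qed.
Lemma ev_opp (K : fieldType) (V : lalgType K) (S : subsp V) (f : endo S) v : f (- v) = - f v.
Proof. by rewrite -scaleN1r ev_scale scaleN1r. Qed.
Lemma ev_sub (K : fieldType) (V : lalgType K) (S : subsp V) (f : endo S) u v : f (u - v) = f u - f v.
Proof. by rewrite ev_add ev_opp. Qed.


Lemma zmod_id (V : zmodType) (a o X U : V) : o - (U - X) - (X + o - U - a) = a.
Proof. rewrite !opprB opprD !addrA.
by rewrite [o + X - U + a + U]addrAC subrK [o + X + a - X]addrAC addrK addrAC subrr add0r. Qed.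

Section Ident.
Variables (K : fieldType) (q : K) (A : algType K) (a b : A) (hA : is_qWeyl_algebra q a b).
Let w := a * b - b * a.
Let x := (1 - q) *: b - 1.
Lemma w_def : w = (q - 1) *: (b * a) + 1.
Proof. rewrite /w (rel_ab hA) scalerBl scale1r; by rewrite addrAC. Qed.

Lemma wb : w * b = q *: (b * w).
Proof.
rewrite w_def mulrDl mul1r -scalerAl -mulrA (rel_ab hA) mulrDr mulr1 -scalerAr.
rewrite mulrDr mulr1 -scalerAr !scalerDr !scalerA [(q-1)*q]mulrC -addrA; congr (_ + _).
by rewrite scalerBl scale1r subrK.
Qed.
Lemma aw : a * w = q *: (w * a).
Proof.
rewrite w_def mulrDr mulr1 -scalerAr mulrA (rel_ab hA) mulrDl mul1r -scalerAl.
rewrite mulrDl mul1r -scalerAl !scalerDr !scalerA [(q-1)*q]mulrC -!mulrA -addrA; congr (_ + _).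
by rewrite scalerBl scale1r subrK.
Qed.
Lemma a_x : a = 1 - q *: w - a * x.
Proof.
rewrite /x /w mulrBr mulr1 -scalerAr (rel_ab hA) scalerBr scalerDr scalerBl scale1r.
by rewrite scalerDr zmod_id.
Qed.
End Ident.


Section Span.
Variables (K : fieldType) (A : algType K).
Local Notation hv := (@horner_alg K A).

Lemma hvXC (v : A) p c : hv v (p * 'X + c%:P) = hv v p * v + c *: 1.
Proof. by rewrite rmorphD rmorphM /= horner_algX horner_algC. Qed.

Lemma comm_h (u v : A) (k : K) : u * v = k *: (v * u) ->
  forall p, exists p', u * hv v p = hv v p' * u.
Proof.
move=> huv; elim/poly_ind=> [|p c [p' IH]]; first by exists 0; rewrite !rmorph0 mulr0 mul0r.
exists (k *: (p' * 'X) + c%:P).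
rewrite !hvXC mulrDr mulrA IH -mulrA huv -scalerAr mulrA.
rewrite rmorphD -mul_polyC !rmorphM /= horner_algX !horner_algC -!scalerAl mul1r mulrDl -!scalerAl -scalerAr mulr1 mul1r.
by [].
Qed.
End Span.

Lemma hvZ (K : fieldType) (A : algType K) (v : A) k p :
  horner_alg v (k *: p) = k *: horner_alg v p.
Proof. by rewrite -mul_polyC rmorphM /= horner_algC -scalerAl mul1r. Qed.

Section Span2.
Variables (K : fieldType) (q : K) (A : algType K) (a b : A) (hA : is_qWeyl_algebra q a b).
Hypotheses (hq0 : q != 0) (h1q : 1 - q != 0).
Local Notation hv := (@horner_alg K A).
Let w := a * b - b * a.
Let x := (1 - q) *: b - 1.

Lemma aux1 p : exists p1 p2, a * hv b p = hv b p1 + hv b p2 * a.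
Proof.
elim/poly_ind: p=> [|p c [p1 [p2 IH]]]; first by exists 0, 0; rewrite !rmorph0 mulr0 mul0r addr0.
exists (p1 * 'X + p2), (q *: (p2 * 'X) + c%:P).
rewrite hvXC mulrDr mulrA IH mulrDl -mulrA (rel_ab hA) mulrDr mulr1 -scalerAr mulrA.
rewrite !rmorphD /= hvZ !rmorphM /= !horner_algX horner_algC mulrDl -!scalerAl mul1r -scalerAr mulr1.
by rewrite -!addrA; congr (_ + _); rewrite addrCA.
Qed.


Lemma span1 y : exists p c, y = hv b p + c * a.
Proof.
pattern y; apply: (left_gen hA).
- by exists 1, 0; rewrite rmorph1 mul0r addr0.
- move=> u v [p [c ->]] [p' [c' ->]]; exists (p + p'), (c + c').
  by rewrite rmorphD mulrDl addrACA.
- move=> k u [p [c ->]]; exists (k *: p), (k *: c).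
  by rewrite hvZ scalerDr scalerAl.
- move=> u [p [c ->]]; have [p1 [p2 e]] := aux1 p.
  exists p1, (hv b p2 + a * c); by rewrite mulrDr e mulrA mulrDl addrA.
- move=> u [p [c ->]]; exists ('X * p), (b * c).
  by rewrite mulrDr mulrA rmorphM /= horner_algX.
Qed.

Lemma b_w : b * w = q^-1 *: (w * b).
Proof. by rewrite /w (wb hA) scalerA mulVf // scale1r. Qed.

Lemma b_x : b = (1 - q)^-1 *: (x + 1).
Proof. by rewrite /x subrK scalerA mulVf // scale1r. Qed.

Lemma span2 y : exists p c, y = hv w p + c * x.
Proof.
pattern y; apply: (left_gen hA).
- by exists 1, 0; rewrite rmorph1 mul0r addr0.
- move=> u v [p [c ->]] [p' [c' ->]]; exists (p + p'), (c + c').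
  by rewrite rmorphD mulrDl addrACA.
- move=> k u [p [c ->]]; exists (k *: p), (k *: c).
  by rewrite hvZ scalerDr scalerAl.
- move=> u [p [c ->]]; have [p' e] := comm_h (aw hA) p.
  exists (p' - q *: (p' * 'X)), (a * c - hv w p' * a).
  rewrite mulrDr e mulrA rmorphB /= hvZ rmorphM /= horner_algX.
  set h := hv w p'.
  have E : h * a = h - q *: (h * w) - (h * a) * x.
    by rewrite [X in h * X = _](a_x hA) mulrBr mulrBr mulr1 -scalerAr mulrA.
  by rewrite {1}E mulrBl addrA addrAC.
- move=> u [p [c ->]]; have [p' e] := comm_h b_w p.
  exists ((1 - q)^-1 *: p'), ((1 - q)^-1 *: hv w p' + b * c).
  rewrite mulrDr e mulrA hvZ mulrDl addrA; congr (_ + _).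
  by rewrite [X in _ * X = _]b_x -scalerAr mulrDr mulr1 scalerDr scalerAl addrC.
Qed.
End Span2.


Lemma fid1 (K : fieldType) (u q h E : K) : u * (1 - q) = 1 -> u * (h - q * E) - q * (u * (h - E)) - h = 0.
Proof.
move=> hu; rewrite !mulrBr !mulrA [q * u]mulrC opprB addrA subrK.
by rewrite -mulrA -mulrBr -{1}(mul1r h) -mulrBl mulrA hu mul1r subrr. Qed.
Lemma fid2 (K : fieldType) (u q h E : K) : u * (1 - q) = 1 -> u * (h - q * E) - u * (h - E) = E.
Proof.
move=> hu; by rewrite !mulrBr opprB addrA addrAC [u*h - _ - _]addrAC subrr add0r addrC -mulrBr -{1}(mul1r E) -mulrBl mulrA hu mul1r.
Qed.

Section Models.
Variables (K : fieldType) (q : K).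
Hypotheses (hq0 : q != 0) (h1q : 1 - q != 0).
Local Notation P := {poly K}.
Local Notation F := (fullsp P).

Definition Mop (g : P) : endo F :=
  @Endo K P F (fun h => g * h) (mulrDr g) (fun k u => esym (scalerAr k g u)) (fun _ _ => I).

Lemma Mop_mul g1 g2 : Mop (g1 * g2) = Mop g1 * Mop g2.
Proof. by apply: endo_ext=> h /=; rewrite mulrA. Qed.

Lemma hornerMop p : horner_alg (Mop 'X) p = Mop p.
Proof.
elim/poly_ind: p=> [|p c IH]; first by rewrite rmorph0; apply: endo_ext=> h /=; rewrite mul0r.
rewrite rmorphD rmorphM /= horner_algX horner_algC IH; apply: endo_ext=> h /=.
by rewrite mulrDl -mulrA mul_polyC mulrA.
Qed.

Definition qn (n : nat) : K := \sum_(k < n) q ^+ k.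
Lemma qnS n : qn n.+1 = 1 + q * qn n.
Proof. by rewrite /qn big_ord_recl expr0 mulr_sumr; congr (_ + _); apply: eq_bigr=> i _; rewrite exprS. Qed.
Lemma qn_neq0 n : (0 < n)%N -> (forall k, (0 < k)%N -> q ^+ k != 1) -> qn n != 0.
Proof.
move=> hn hq; apply/eqP=> e; have := subrX1 q n; rewrite -/(qn n) e mulr0 => /eqP.
by rewrite subr_eq0 (negbTE (hq _ hn)).
Qed.

Definition Dq (h : P) : P := \poly_(i < size h) (qn i.+1 * h`_i.+1).
Lemma coef_Dq h i : (Dq h)`_i = qn i.+1 * h`_i.+1.
Proof.
rewrite coef_poly; case: ltnP=> // hi.
by rewrite nth_default ?mulr0 // (leq_trans hi).
Qed.
Lemma Dq_add u v : Dq (u + v) = Dq u + Dq v.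
Proof. by apply/polyP=> i; rewrite coefD !coef_Dq coefD mulrDr. Qed.
Lemma Dq_scale k u : Dq (k *: u) = k *: Dq u.
Proof. by apply/polyP=> i; rewrite coefZ !coef_Dq coefZ mulrCA. Qed.
Definition D1 : endo F := @Endo K P F Dq Dq_add Dq_scale (fun _ _ => I).

Lemma rel1 : qWeyl_rel q D1 (Mop 'X).
Proof.
rewrite /qWeyl_rel; apply: endo_ext=> h /=; apply/polyP=> i.
rewrite !coefB coefZ !coef_Dq !coefXM coef0 /=.
case: i=> [|j] /=; first by rewrite /qn big_ord1 expr0 mul1r mulr0 subr0 subrr.
by rewrite coef_Dq qnS mulrDl mul1r mulrA addrK subrr.
Qed.

Lemma Dq1 : Dq 1 = 0.
Proof. by apply/polyP=> i; rewrite coef_Dq coef1 coef0 mulr0. Qed.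

Definition sc (c : K) (h : P) : P := \poly_(i < size h) (c ^+ i * h`_i).
Lemma coef_sc c h i : (sc c h)`_i = c ^+ i * h`_i.
Proof. rewrite coef_poly; case: ltnP=> // hi; by rewrite nth_default ?mulr0. Qed.
Lemma sc_add c u v : sc c (u + v) = sc c u + sc c v.
Proof. by apply/polyP=> i; rewrite coefD !coef_sc coefD mulrDr. Qed.
Lemma sc_scale c k u : sc c (k *: u) = k *: sc c u.
Proof. by apply/polyP=> i; rewrite coefZ !coef_sc coefZ mulrCA. Qed.
Lemma sc_sc c d h : sc c (sc d h) = sc (c * d) h.
Proof. by apply/polyP=> i; rewrite !coef_sc mulrA exprMn. Qed.
Lemma sc1 h : sc 1 h = h.
Proof. by apply/polyP=> i; rewrite !coef_sc expr1n mul1r. Qed.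
Lemma coef_1X (k : K) (g : P) i : ((1 - k *: 'X) * g)`_i = g`_i - k * (if i == 0%N then 0 else g`_i.-1).
Proof. by rewrite mulrBl mul1r -scalerAl coefB coefZ coefXM. Qed.
Lemma sc_1X (r k : K) (g : P) : sc r ((1 - k *: 'X) * g) = (1 - (r * k) *: 'X) * sc r g.
Proof.
apply/polyP=> i; rewrite coef_sc !coef_1X !coef_sc.
case: i=> [|j] /=; first by rewrite !mulr0 !subr0.
rewrite mulrBr exprS; congr (_ - _); rewrite -!mulrA; congr (_ * _); exact: mulrCA.
Qed.

Definition A2f (h : P) : P := (1 - q *: 'X) * sc q h.
Definition B2f (h : P) : P := (1 - q)^-1 *: sc q^-1 h.
Lemma A2_add u v : A2f (u + v) = A2f u + A2f v.
Proof. by rewrite /A2f sc_add mulrDr. Qed.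
Lemma A2_scale k u : A2f (k *: u) = k *: A2f u.
Proof. by rewrite /A2f sc_scale scalerAr. Qed.
Lemma B2_add u v : B2f (u + v) = B2f u + B2f v.
Proof. by rewrite /B2f sc_add scalerDr. Qed.
Lemma B2_scale k u : B2f (k *: u) = k *: B2f u.
Proof. by rewrite /B2f sc_scale !scalerA mulrC. Qed.
Definition A2 : endo F := @Endo K P F A2f A2_add A2_scale (fun _ _ => I).
Definition B2 : endo F := @Endo K P F B2f B2_add B2_scale (fun _ _ => I).

Lemma AB2 h : A2f (B2f h) = (1 - q)^-1 *: ((1 - q *: 'X) * h).
Proof. by rewrite /A2f /B2f sc_scale sc_sc mulfV // sc1 scalerAr. Qed.
Lemma BA2 h : B2f (A2f h) = (1 - q)^-1 *: ((1 - 'X) * h).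
Proof. by rewrite /A2f /B2f sc_1X sc_sc mulVf // sc1 scale1r. Qed.

Lemma rel2 : qWeyl_rel q A2 B2.
Proof.
rewrite /qWeyl_rel; apply: endo_ext=> h /=.
rewrite AB2 BA2; apply/polyP=> i; rewrite !coefB !coefZ -{2}(scale1r 'X) !coef_1X coef0 mul1r.
by apply: fid1; rewrite mulVf.
Qed.

Lemma w2 : A2 * B2 - B2 * A2 = Mop 'X.
Proof.
apply: endo_ext=> h /=.
rewrite AB2 BA2; apply/polyP=> i; rewrite !coefB !coefZ -{2}(scale1r 'X) !coef_1X coefXM mul1r.
by apply: fid2; rewrite mulVf.
Qed.

Lemma size_Dq (h : P) : (size (Dq h) <= (size h).-1)%N.
Proof.
apply/leq_sizeP=> j hj; rewrite coef_Dq nth_default ?mulr0 //.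
by case: (size h) hj=> // n; rewrite ltnS.
Qed.

Lemma Dq_neq0 (h : P) : (forall k, (0 < k)%N -> q ^+ k != 1) -> (1 < size h)%N -> Dq h != 0.
Proof.
move=> hq hs; case e: (size h) hs => [|[|n]] // _.
apply/eqP=> /(congr1 (fun p : P => p`_n)); rewrite coef_Dq coef0 => /eqP.
rewrite mulf_eq0 (negbTE (qn_neq0 _ hq)) //=.
have : lead_coef h != 0 by rewrite lead_coef_eq0 -size_poly_eq0 e.
by rewrite lead_coefE e => /negbTE ->.
Qed.
End Models.


Section PartA.
Variables (K : fieldType) (q : K) (hq0 : q != 0) (hq : forall n : nat, (0 < n)%N -> q ^+ n != 1).
Variables (A : algType K) (a b : A) (hA : is_qWeyl_algebra q a b).
Variables (f1 : A -> endo (fullsp {poly K})) (hf1 : is_alg_morph f1)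
  (f1a : f1 a = D1 q) (f1b : f1 b = Mop 'X).

Lemma h1q : 1 - q != 0.
Proof. by rewrite subr_eq0 eq_sym -[X in X != _](expr1 q) hq. Qed.

Let phi y := f1 y 1.
Lemma phi1M y z : phi (y * z) = f1 y (phi z). Proof. by rewrite /phi (mM hf1). Qed.
Lemma phi1D y z : phi (y + z) = phi y + phi z. Proof. by rewrite /phi (mD hf1). Qed.
Lemma phi1Z k y : phi (k *: y) = k *: phi y. Proof. by rewrite /phi (mZ hf1). Qed.
Lemma phi1B y z : phi (y - z) = phi y - phi z. Proof. by rewrite /phi (mB hf1). Qed.
Lemma phi11 : phi 1 = 1. Proof. by rewrite /phi (m1 hf1). Qed.
Lemma f1h p : f1 (horner_alg b p) = Mop p. Proof. by rewrite (mH hf1) f1b hornerMop. Qed.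
Lemma phi1_h p : phi (horner_alg b p) = p. Proof. by rewrite /phi f1h /= mulr1. Qed.
Lemma phi1_ca c : phi (c * a) = 0.
Proof. by rewrite phi1M /phi f1a /= Dq1 ev_zero. Qed.
Lemma ker1 y : phi y = 0 -> lprinc a y.
Proof.
have [p [c ->]] := span1 hA y.
rewrite phi1D phi1_h phi1_ca addr0 => ->; exists c; by rewrite rmorph0 add0r.
Qed.

Lemma J_ideal : left_ideal (lprinc a).
Proof.
split; first by exists 0; rewrite mul0r.
- by move=> u v [c ->] [d ->]; exists (c + d); rewrite mulrDl.
- by move=> r u [c ->]; exists (r * c); rewrite mulrA.
Qed.

Lemma descent (I' : A -> Prop) : (forall u v, I' u -> I' v -> I' (u + v)) ->
  (forall r u, I' u -> I' (r * u)) -> (forall y, lprinc a y -> I' y) ->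
  forall n y, (size (phi y) <= n)%N -> I' y -> phi y != 0 -> I' 1.
Proof.
move=> ID IM hJ; elim=> [|n IH] y hs Iy hy.
  by move: hy; rewrite -size_poly_eq0; move: hs; rewrite leqn0 => ->.
case: (ltnP 1 (size (phi y)))=> hs1.
  apply: (IH (a * y)); last 2 first.
  - exact: IM.
  - by rewrite phi1M f1a /=; apply: Dq_neq0.
  rewrite phi1M f1a /=; apply: (leq_trans (size_Dq _ _)).
  by rewrite -ltnS (ltn_predK hs1).
have [c hc] : exists c, phi y = c%:P.
  by exists (phi y)`_0; apply/size1_polyC.
have c0 : c != 0 by move: hy; rewrite hc polyC_eq0.
have Jd : I' (y - c *: 1).
  apply: hJ; apply: ker1; by rewrite phi1B phi1Z phi11 hc alg_polyC subrr.
have Ic : I' (c *: 1).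
  have -> : c *: (1 : A) = y + (-1) * (y - c *: 1) by rewrite mulN1r opprB addrC subrK.
  by apply: ID=> //; apply: IM.
have -> : (1 : A) = (c^-1 *: 1) * (c *: 1) by rewrite -scalerAl mul1r scalerA mulVf // scale1r.
exact: IM.
Qed.

Lemma J_max : maximal_left_ideal (lprinc a).
Proof.
split; first exact: J_ideal.
- exists 1=> [[c e]]; have := phi1_ca c; rewrite -e phi11 => /eqP; by rewrite oner_eq0.
move=> I' [I0 ID IM] hJ.
case: (classic (forall y, I' y -> lprinc a y))=> hc.
  by left=> y; split; [apply: hc | apply: hJ].
right; have [y0 hy0] := not_all_ex_not _ _ hc; have [Iy0 nJ] := imply_to_and _ _ hy0.
have I1 : I' 1.
  apply: (descent ID IM hJ (leqnn _) Iy0).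
  by apply/eqP=> /ker1.
by move=> z; rewrite -(mulr1 z); apply: IM.
Qed.

Lemma partA2 (sigma : A -> A) (hsig : is_alg_morph sigma) (hsb : sigma b = q *: b) (m : nat) :
  ~ exists c : A, lprinc a (iter m sigma ((1 - q) *: b - 1) * c - 1).
Proof.
have it : iter m sigma ((1 - q) *: b - 1) = ((1 - q) * q ^+ m) *: b - 1.
  elim: m=> [|m IH]; first by rewrite expr0 mulr1.
  by rewrite iterS IH (mB hsig) (mZ hsig) (m1 hsig) hsb scalerA exprSr mulrA.
rewrite it; set k := (1 - q) * q ^+ m.
have k0 : k != 0 by rewrite mulf_neq0 ?h1q // expf_neq0.
move=> [c [d e]].
have := phi1_ca d; rewrite -e phi1B phi1M phi11 (mB hf1) (mZ hf1) (m1 hf1) f1b /=.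
move/(congr1 (fun p : {poly K} => p.[k^-1])); rewrite !hornerE /= mulfV // mul1r subrr sub0r.
by move/eqP; rewrite oppr_eq0 oner_eq0.
Qed.
End PartA.


Lemma ex_minP (P : nat -> Prop) : (exists n, P n) -> exists m, P m /\ forall j, P j -> (m <= j)%N.
Proof.
move=> [n0 Pn0]; apply: NNPP=> H.
have : forall n j, (j <= n)%N -> ~ P j.
  elim=> [|n IH] j.
    rewrite leqn0=> /eqP -> P0; apply: H; exists 0%N; split=> // *.
  rewrite leq_eqVlt ltnS => /orP [/eqP -> Pn|]; last exact: IH.
  apply: H; exists n.+1; split=> // j' Pj'; rewrite ltnNge; apply/negP=> hj'.
  exact: (IH j').
by move/(_ n0 n0 (leqnn _)).
Qed.

Definition vanish (K : fieldType) (m : nat) (h : {poly K}) := forall i, (i < m)%N -> h`_i = 0.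

Lemma vanish_X (K : fieldType) m (h : {poly K}) : vanish m h -> h = 'X^m * \poly_(i < size h) h`_(i + m).
Proof.
move=> hv; apply/polyP=> i; rewrite coefXnM coef_poly.
case: ltnP=> him; first by rewrite hv.
case: ltnP=> hs; first by rewrite subnK.
by rewrite nth_default // (leq_trans hs) // leq_subr.
Qed.

Lemma vanish_XM (K : fieldType) m (g : {poly K}) : vanish m ('X^m * g).
Proof. by move=> i hi; rewrite coefXnM hi. Qed.

Section PartB.
Variables (K : fieldType) (q : K) (hq0 : q != 0) (hq : forall n : nat, (0 < n)%N -> q ^+ n != 1).
Variables (A : algType K) (a b : A) (hA : is_qWeyl_algebra q a b).
Variables (f2 : A -> endo (fullsp {poly K})) (hf2 : is_alg_morph f2)
  (f2a : f2 a = A2 q) (f2b : f2 b = B2 q).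
Let w := a * b - b * a.
Let x := (1 - q) *: b - 1.
Let Ax := lprinc x.
Let h1q := h1q hq.

Let phi y := f2 y 1.
Lemma phi2M y z : phi (y * z) = f2 y (phi z). Proof. by rewrite /phi (mM hf2). Qed.
Lemma phi2D y z : phi (y + z) = phi y + phi z. Proof. by rewrite /phi (mD hf2). Qed.
Lemma phi2Z k y : phi (k *: y) = k *: phi y. Proof. by rewrite /phi (mZ hf2). Qed.
Lemma phi2B y z : phi (y - z) = phi y - phi z. Proof. by rewrite /phi (mB hf2). Qed.
Lemma phi20 : phi 0 = 0. Proof. by rewrite /phi (m0 hf2). Qed.
Lemma f2w : f2 w = Mop 'X.
Proof. by rewrite /w (mB hf2) !(mM hf2) f2a f2b w2. Qed.
Lemma f2h p : f2 (horner_alg w p) = Mop p. Proof. by rewrite (mH hf2) f2w hornerMop. Qed.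
Lemma phi2_h p : phi (horner_alg w p) = p. Proof. by rewrite /phi f2h /= mulr1. Qed.
Lemma sc_one (c : K) : sc c 1 = 1.
Proof. apply/polyP=> i; rewrite coef_sc coef1; case: eqP=> [->|_]; by rewrite ?expr0 ?mul1r ?mulr0. Qed.
Lemma phi2_cx c : phi (c * x) = 0.
Proof.
rewrite phi2M /phi /x (mB hf2) (mZ hf2) (m1 hf2) f2b /= /B2f sc_one scalerA mulfV // scale1r subrr.
exact: ev_zero.
Qed.
Lemma ker2 y : phi y = 0 -> Ax y.
Proof.
have [p [c ->]] := span2 hA hq0 h1q y.
rewrite phi2D phi2_h phi2_cx addr0 => ->; exists c; by rewrite rmorph0 add0r.
Qed.
Lemma hw_Xn m : w ^+ m = horner_alg w 'X^m.
Proof. by rewrite rmorphXn /= horner_algX. Qed.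

Lemma wN_iff m y : lmul_submod Ax (w ^+ m) y <-> vanish m (phi y).
Proof.
split.
  move=> [n [c e]]; have := congr1 phi e; rewrite phi2B phi2_cx => /subr0_eq ->.
  by rewrite phi2M hw_Xn f2h /=; apply: vanish_XM.
move=> hv; exists (horner_alg w (\poly_(i < size (phi y)) (phi y)`_(i + m))).
by apply: ker2; rewrite phi2B phi2M hw_Xn f2h /= phi2_h -vanish_X // subrr.
Qed.

Lemma pres_vanish m : forall y h, vanish m h -> vanish m (f2 y h).
Proof.
apply: (gen hA).
- by move=> h; rewrite (m1 hf2).
- by move=> u v hu hv h hh i hi; rewrite (mD hf2) /= coefD hu ?hv ?addr0.
- by move=> k u hu h hh i hi; rewrite (mZ hf2) /= coefZ hu ?mulr0.
- by move=> u v hu hv h hh; rewrite (mM hf2) /=; apply: hu; apply: hv.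
- move=> h hh i hi; rewrite f2a /= /A2f coef_1X !coef_sc hh // mulr0.
  case: i hi=> [|j] hj /=; first by rewrite mulr0 subr0.
  by rewrite hh ?mulr0 ?subr0 // ltnW.
- by move=> h hh i hi; rewrite f2b /= /B2f coefZ coef_sc hh // !mulr0.
Qed.

Lemma phi_wm m : phi (w ^+ m) = 'X^m.
Proof. by rewrite hw_Xn phi2_h. Qed.

Lemma wm_notAx m : ~ Ax (w ^+ m).
Proof.
move=> [c e]; have := phi2_cx c; rewrite -e phi_wm => /(congr1 (fun p : {poly K} => p`_m)).
by rewrite coefXn eqxx coef0 => /eqP; rewrite oner_eq0.
Qed.

Lemma Ax_phi y : Ax y -> phi y = 0.
Proof. by move=> [c ->]; apply: phi2_cx. Qed.

Lemma b3 m : submod_quot Ax (lmul_submod Ax (w ^+ m)) /\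
             nonzero_submod Ax (lmul_submod Ax (w ^+ m)).
Proof.
split; last first.
  exists (w ^+ m); split; last exact: wm_notAx.
  by apply/wN_iff; rewrite phi_wm -(mulr1 'X^m); apply: vanish_XM.
split; last by move=> y /Ax_phi e; apply/wN_iff; rewrite e=> i _; rewrite coef0.
split.
- by apply/wN_iff; rewrite phi20=> i _; rewrite coef0.
- move=> u v /wN_iff hu /wN_iff hv; apply/wN_iff; rewrite phi2D=> i hi.
  by rewrite coefD hu ?hv ?addr0.
- move=> r u /wN_iff hu; apply/wN_iff; rewrite phi2M; exact: pres_vanish.
Qed.

Lemma b4 m : (forall y, lmul_submod Ax (w ^+ m.+1) y -> lmul_submod Ax (w ^+ m) y) /\
             exists y, lmul_submod Ax (w ^+ m) y /\ ~ lmul_submod Ax (w ^+ m.+1) y.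
Proof.
split.
  by move=> y /wN_iff hv; apply/wN_iff=> i hi; apply: hv; apply: ltnW.
exists (w ^+ m); split.
  by apply/wN_iff; rewrite phi_wm -(mulr1 'X^m); apply: vanish_XM.
move/wN_iff; rewrite phi_wm=> /(_ m (ltnSn m)); rewrite coefXn eqxx => /eqP.
by rewrite oner_eq0.
Qed.

Lemma b1 : ~ artinian_quot Ax.
Proof.
move=> hart; have [n hn] := hart (fun n => lmul_submod Ax (w ^+ n)) (fun n => (b3 n).1)
  (fun n => (b4 n).1).
have [_ [y [hy ny]]] := b4 n.
by apply: ny; apply/(hn n.+1 (leqnSn n)).
Qed.

Lemma rpow_neq m d : (m < d)%N -> (q^-1) ^+ m != (q^-1) ^+ d.
Proof.
move=> hmd; rewrite -(subnKC (ltnW hmd)) exprD; apply/eqP=> e.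
have : (q^-1) ^+ (d - m) = 1.
  apply: (mulfI (expf_neq0 m (invr_neq0 hq0))); by rewrite mulr1 -e.
rewrite exprVn => /eqP; rewrite invr_eq1; apply/negP; apply: hq; by rewrite subn_gt0.
Qed.

Lemma kill (S : A -> Prop) m : S 0 -> (forall r u, S u -> S (r * u)) ->
  (forall y, S y -> vanish m (phi y)) ->
  forall n y, S y -> (size (phi y) <= n)%N -> exists s, S s /\ phi s = (phi y)`_m *: 'X^m.
Proof.
move=> S0 SM vanS; elim=> [|n IH] y Sy hs.
  exists 0; split=> //; have -> : phi y = 0 by apply/eqP; rewrite -size_poly_eq0 -leqn0.
  by rewrite phi20 coef0 scale0r.
case: (leqP (size (phi y)) m.+1) => hsm.
  exists y; split=> //; apply/polyP=> i; rewrite coefZ coefXn.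
  case: (ltngtP i m) => [him|him|->]; last by rewrite mulr1.
  - by rewrite vanS // mulr0.
  - by rewrite nth_default ?mulr0 // (leq_trans hsm).
set h := phi y; set d := (size h).-1; set r := q^-1.
have hsd : size h = d.+1 by rewrite /d prednK // (leq_ltn_trans _ hsm).
have hd : (m < d)%N by rewrite -ltnS -hsd.
have hdn : (d <= n)%N by rewrite -ltnS -hsd.
pose y' := ((1 - q) *: b - r ^+ d *: 1) * y.
have Sy' : S y' by apply: SM.
have coef' : forall i, (phi y')`_i = (r ^+ i - r ^+ d) * h`_i.
  move=> i; rewrite /y' phi2M (mB hf2) !(mZ hf2) (m1 hf2) f2b /= /B2f scalerA mulfV // scale1r.
  by rewrite coefB coefZ coef_sc mulrBl.
have hs' : (size (phi y') <= n)%N.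
  apply/leq_sizeP=> j hj; rewrite coef'.
  have : (d <= j)%N by apply: leq_trans hj.
  rewrite leq_eqVlt => /orP [/eqP <-|hj']; first by rewrite subrr mul0r.
  by rewrite nth_default ?mulr0 // hsd.
have [s' [Ss' e']] := IH y' Sy' hs'.
have k0 : r ^+ m - r ^+ d != 0 by rewrite subr_eq0 rpow_neq.
exists ((r ^+ m - r ^+ d)^-1 *: s'); split.
  have -> : (r ^+ m - r ^+ d)^-1 *: s' = ((r ^+ m - r ^+ d)^-1 *: 1) * s' by rewrite -scalerAl mul1r.
  exact: SM.
by rewrite phi2Z e' coef' scalerA mulrA mulVf // mul1r.
Qed.

Lemma b2 (S : A -> Prop) : submod_quot Ax S ->
  (nonzero_submod Ax S <-> exists m, pred_eq S (lmul_submod Ax (w ^+ m))).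
Proof.
move=> [[S0 SD SM] hL]; split; last first.
  move=> [m hm]; have [_ [y [hy ny]]] := b3 m; exists y; split=> //; by apply/hm.
move=> [y0 [Sy0 ny0]].
have p0 : phi y0 != 0 by apply/eqP=> /ker2.
have [k hk] : exists k, (phi y0)`_k != 0.
  apply: NNPP=> H; move/eqP: p0; apply; apply/polyP=> i; rewrite coef0.
  by apply/eqP; apply: contra_notT H=> hi; exists i.
have [m [[y1 [Sy1 hy1]] mmin]] := @ex_minP (fun k => exists y, S y /\ (phi y)`_k != 0)
  (ex_intro _ k (ex_intro _ y0 (conj Sy0 hk))).
have vanS : forall y, S y -> vanish m (phi y).
  move=> y Sy i hi; apply/eqP; apply: contraT => ne.
  have := mmin i (ex_intro _ y (conj Sy ne)); by rewrite leqNgt hi.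
have [s [Ss es]] := kill S0 SM vanS Sy1 (leqnn _).
pose sm := (((phi y1)`_m)^-1 *: 1) * s.
have Ssm : S sm by apply: SM.
have esm : phi sm = 'X^m by rewrite phi2M (mZ hf2) (m1 hf2) /= es scalerA mulVf // scale1r.
exists m=> y; split.
  by move=> Sy; apply/wN_iff; exact: vanS.
move/wN_iff => hv.
set g := \poly_(i < size (phi y)) (phi y)`_(i + m).
have Sz : S (horner_alg w g * sm) by apply: SM.
have Ad : Ax (y - horner_alg w g * sm).
  by apply: ker2; rewrite phi2B phi2M f2h /= esm mulrC -vanish_X // subrr.
by have := SD _ _ Sz (hL _ Ad); rewrite addrC subrK.
Qed.
End PartB.

End Helpers.
Import Helpers.

Theorem proposition3p3 (K : fieldType) (q : K) (hq0 : q != 0)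
    (hq : forall n : nat, (0 < n)%N -> q ^+ n != 1)
    (A : algType K) (a b : A) (hA : is_qWeyl_algebra q a b)
    (sigma : A -> A) (hsig : is_alg_morph sigma) (hsigbij : bijective sigma)
    (hsa : sigma a = q^-1 *: a) (hsb : sigma b = q *: b) :
  let w := a * b - b * a in
  let J := lprinc a in
  let x := (1 - q) *: b - 1 in
  let Ax := lprinc x in
  let wN := fun m : nat => lmul_submod Ax (w ^+ m) in
  (maximal_left_ideal J /\
   forall m : nat, ~ exists c : A, J (iter m sigma x * c - 1)) /\
  [/\ ~ artinian_quot Ax,
      (forall S : A -> Prop, submod_quot Ax S ->
         (nonzero_submod Ax S <-> exists m : nat, pred_eq S (wN m))),
      (forall m : nat, submod_quot Ax (wN m) /\ nonzero_submod Ax (wN m)) &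
      (forall m : nat, (forall y, wN m.+1 y -> wN m y) /\
                       exists y, wN m y /\ ~ wN m.+1 y)].
Proof.
move=> w J x Ax wN.
have [f1 [hf1 f1a f1b]] := univ_ex hA (rel1 q).
have [f2 [hf2 f2a f2b]] := univ_ex hA (rel2 hq0 (h1q hq)).
split; first split.
- exact: (J_max hq hA hf1 f1a f1b).
- move=> m; exact: (partA2 hq0 hq hf1 f1a f1b hsig hsb).
split.
- exact: (b1 hq0 hq hA hf2 f2a f2b).
- move=> S; exact: (b2 hq0 hq hA hf2 f2a f2b).
- move=> m; exact: (b3 hq0 hq hA hf2 f2a f2b).
- move=> m; exact: (b4 hq0 hq hA hf2 f2a f2b).
Qed.
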